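(* Let $X$ be a uniformly joinable, chain connected Hausdorff uniform space and let $f\colon X\to Y$ generate the uniform structure of the (Hausdorff) uniform space $Y$. The following are equivalent: (a) $f$ is a generalized uniform covering map; (b) $f$ satisfies conditions GP1 and GP2; (c) $\widetilde f\colon GP(X,x_0)\to GP(Y,f(x_0))$ is a uniform equivalence for some $x_0\in X$.
   Context: $f(E)=\{(f(x),f(y)):(x,y)\in E\}$; a surjection $f$ generates the uniform structure of its range if the sets $f(E)$ form a base of it. $R(X,E)$ is the Rips complex (vertex set $X$, simplices the finite $F$ with $F\times F\subset E$); $e(x,y)$ the edge-path; $E$-chains $x_0,\dots,x_n$ ($(x_i,x_{i+1})\in E$) are regarded as edge-paths in $R(X,E)$. $X$ is chain connected if for each $E$ any two points are joined by an $E$-chain. Paths $c,d$ in $R(X,E)$ with end-points in $X$ are $E$-homotopic if their initial points $x_c,x_d$ and terminal points $y_c,y_d$ satisfy $(x_c,x_d),(y_c,y_d)\in E$ and $c\simeq e(x_c,x_d)\ast d\ast e(y_d,y_c)$ rel. end-points in $R(X,E)$. A generalized path from $x$ to $y$ is a family $\{[c_E]\}_E$ of homotopy classes rel. end-points of paths from $x$ to $y$ in $R(X,E)$ with $c_F\simeq c_E$ in $R(X,E)$ for $F\subset E$; it is $F$-short if $(x,y)\in F$ and $c_F\simeq e(x,y)$ in $R(X,F)$; generalized paths $c,d$ are $F$-homotopic if $c_F$ is $F$-homotopic to $d_F$. $GP(X,x_0)$: generalized paths from $x_0$ with uniform base $F^\ast=\{(c,d): c,d\ F\text{-homotopic}\}$.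 $\widetilde f(c)_F=[f_E(c_E)]$, $E=f^{-1}(F)$. $X$ is uniformly joinable if for each $E$ there is $F$ with any $(x,y)\in F$ joined by an $E$-short generalized path. A generalized uniform covering map is an $f$ generating the uniform structure of $Y$ with: GP1: for every $x_0$ every generalized path in $Y$ from $f(x_0)$ is $\widetilde f(d)$ for a generalized path $d$ from $x_0$; GP2: for every entourage $E$ of $X$ there is $F$ such that generalized paths $\alpha,\beta$ in $X$ with common origin are $E$-homotopic if $\widetilde f(\alpha),\widetilde f(\beta)$ are $f(F)$-homotopic; C1: for every $E$ there is $F$ such that every $f(F)$-chain starting at $f(x_0)$ lifts to an $E$-chain starting at $x_0$; C2: for every $E$ there is $F$ such that $F$-chains $\alpha,\beta$ with common origin are $E$-homotopic if $f(\alpha),f(\beta)$ are $f(F)$-homotopic. *)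

(* Defs.v *)
From Stdlib Require Import List.
Import ListNotations.
Set Implicit Arguments.

Definition rel (T : Type) := T -> T -> Prop.
Definition subrel {T} (E F : rel T) := forall x y, E x y -> F x y.

Record UniformSpace := {
  carrier :> Type;
  ent : rel carrier -> Prop;
  ent_full : ent (fun _ _ => True);
  ent_diag : forall E x, ent E -> E x x;
  ent_super : forall E F, ent E -> subrel E F -> ent F;
  ent_meet : forall E F, ent E -> ent F -> ent (fun x y => E x y /\ F x y);
  ent_inv : forall E, ent E -> ent (fun x y => E y x);
  ent_half : forall E, ent E ->
    exists F, ent F /\ forall x y z, F x y -> F y z -> E x z }.
Arguments ent {_} _.

(* "Entourage" in the paper: symmetric entourage. *)
Definition sent {X : UniformSpace} (E : rel X) : Prop :=
  ent E /\ (forall x y, E x y -> E y x).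

Definition Hausdorff (X : UniformSpace) : Prop :=
  forall x y : X, (forall E, ent E -> E x y) -> x = y.

Definition img {A B} (f : A -> B) (E : rel A) : rel B :=
  fun u v => exists x y, E x y /\ f x = u /\ f y = v.
Definition preim {A B} (f : A -> B) (F : rel B) : rel A :=
  fun x y => F (f x) (f y).

Definition generates {X Y : UniformSpace} (f : X -> Y) : Prop :=
  (forall y, exists x, f x = y) /\
  (forall E, ent E -> ent (img f E)) /\
  (forall F, ent F -> exists E, ent E /\ subrel (img f E) F).

(* Rips complex R(X,E): finite simplices F with F x F in E *)
Definition rips_simplex {T} (E : rel T) (l : list T) : Prop :=
  forall p q, In p l -> In q l -> E p q.

Fixpoint consec {T} (E : rel T) (l : list T) : Prop :=
  match l with
  | a :: ((b :: _) as t) => E a b /\ consec E t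
  | _ => True
  end.

Definition epath {T} (E : rel T) (x y : T) (l : list T) : Prop :=
  hd_error l = Some x /\ last l x = y /\
  consec (fun a b => rips_simplex E [a; b]) l.

Definition chain {T} (E : rel T) (x : T) (l : list T) : Prop :=
  hd_error l = Some x /\ consec E l.

(* homotopy rel. end-points of edge paths in R(X,E)
   (edge-path equivalence of the simplicial complex) *)
Inductive ehtp {T} (E : rel T) : list T -> list T -> Prop :=
| eh_refl l : ehtp E l l
| eh_sym l m : ehtp E l m -> ehtp E m l
| eh_trans l m n : ehtp E l m -> ehtp E m n -> ehtp E l n
| eh_tri u v a b c : rips_simplex E [a; b; c] ->
    ehtp E (u ++ a :: b :: c :: v) (u ++ a :: c :: v)
| eh_deg u v a : rips_simplex E [a] ->
    ehtp E (u ++ a :: a :: v) (u ++ a :: v).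

(* E-homotopy of paths with endpoints in X:
   c ~ e(x_c,x_d) * d * e(y_d,y_c) rel end-points in R(X,E) *)
Definition lhomot {T} (E : rel T) (l m : list T) : Prop :=
  exists xc yc xd yd,
    hd_error l = Some xc /\ last l xc = yc /\
    hd_error m = Some xd /\ last m xd = yd /\
    E xc xd /\ E yc yd /\ ehtp E l (xc :: m ++ [yc]).

(* generalized path from x to y: a representative c_E for each entourage E *)
Definition gen_path {X : UniformSpace} (x y : X) (c : rel X -> list X) : Prop :=
  (forall E, sent E -> epath E x y (c E)) /\
  (forall E F, sent E -> sent F -> subrel F E -> ehtp E (c F) (c E)).

Definition in_GP {X : UniformSpace} (x0 : X) (c : rel X -> list X) : Prop :=
  exists y, gen_path x0 y c.

(* equality of generalized paths (as families of homotopy classes) *)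
Definition gp_eq {X : UniformSpace} (c d : rel X -> list X) : Prop :=
  forall E, sent E -> ehtp E (c E) (d E).

Definition gp_homot {X : UniformSpace} (F : rel X) (c d : rel X -> list X) : Prop :=
  lhomot F (c F) (d F).

Definition short {X : UniformSpace} (E : rel X) (x y : X) (c : rel X -> list X) : Prop :=
  E x y /\ ehtp E (c E) [x; y].

Definition uniformly_joinable (X : UniformSpace) : Prop :=
  forall E : rel X, sent E -> exists F, sent F /\
    forall x y, F x y -> exists c, gen_path x y c /\ short E x y c.

Definition chain_connected (X : UniformSpace) : Prop :=
  forall E : rel X, sent E -> forall x y : X,
    exists l, chain E x l /\ last l x = y.

Definition tilde {X Y : UniformSpace} (f : X -> Y) (c : rel X -> list X) : rel Y -> list Y :=
  fun F => map f (c (preim f F)).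

Definition GP1 {X Y : UniformSpace} (f : X -> Y) : Prop :=
  forall (x0 : X) e, in_GP (f x0) e ->
    exists d, in_GP x0 d /\ gp_eq (tilde f d) e.

Definition GP2 {X Y : UniformSpace} (f : X -> Y) : Prop :=
  forall E : rel X, sent E -> exists F, sent F /\
    forall (x0 : X) a b, in_GP x0 a -> in_GP x0 b ->
      gp_homot (img f F) (tilde f a) (tilde f b) -> gp_homot E a b.

Definition C1 {X Y : UniformSpace} (f : X -> Y) : Prop :=
  forall E : rel X, sent E -> exists F, sent F /\
    forall (x0 : X) l, chain (img f F) (f x0) l ->
      exists l', chain E x0 l' /\ map f l' = l.

Definition C2 {X Y : UniformSpace} (f : X -> Y) : Prop :=
  forall E : rel X, sent E -> exists F, sent F /\
    forall (x0 : X) a b, chain F x0 a -> chain F x0 b ->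
      lhomot (img f F) (map f a) (map f b) -> lhomot E a b.

Definition gen_uniform_covering {X Y : UniformSpace} (f : X -> Y) : Prop :=
  generates f /\ GP1 f /\ GP2 f /\ C1 f /\ C2 f.

(* \tilde f : GP(X,x0) -> GP(Y,f x0) is a uniform equivalence:
   bijective on points, uniformly continuous with uniformly continuous
   inverse, w.r.t. the bases {F*} *)
Definition tilde_unif_equiv {X Y : UniformSpace} (f : X -> Y) (x0 : X) : Prop :=
  (forall c d, in_GP x0 c -> in_GP x0 d ->
     gp_eq (tilde f c) (tilde f d) -> gp_eq c d) /\
  (forall e, in_GP (f x0) e -> exists c, in_GP x0 c /\ gp_eq (tilde f c) e) /\
  (forall F : rel Y, sent F -> exists E : rel X, sent E /\
     forall c d, in_GP x0 c -> in_GP x0 d ->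
       gp_homot E c d -> gp_homot F (tilde f c) (tilde f d)) /\
  (forall E : rel X, sent E -> exists F : rel Y, sent F /\
     forall c d, in_GP x0 c -> in_GP x0 d ->
       gp_homot F (tilde f c) (tilde f d) -> gp_homot E c d).

(* Main.v *)
Require Import Defs.
From Stdlib Require Import List Classical.
Import ListNotations.

Lemma last_cons {T} (a : T) l d : last (a::l) d = last l a.
Proof. revert a d; induction l as [|b l IH]; intros a d. reflexivity.
  change (last (b::l) d = last (b::l) a). rewrite (IH b d), (IH b a). reflexivity. Qed.

Lemma last_app {T} (l m : list T) d : last (l ++ m) d = last m (last l d).
Proof. revert d; induction l as [|a l IH]; intros d. reflexivity.
  simpl app. rewrite last_cons, IH, last_cons. reflexivity. Qed.

Lemma last_map {A B} (f : A -> B) l d : last (map f l) (f d) = f (last l d).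
Proof. revert d; induction l as [|a l IH]; intros d. reflexivity.
  simpl map. rewrite !last_cons. apply IH. Qed.

Lemma hd_error_app {T} (l m : list T) x : hd_error l = Some x -> hd_error (l ++ m) = Some x.
Proof. destruct l; simpl; congruence. Qed.

Lemma hd_error_map {A B} (f : A -> B) l x : hd_error l = Some x -> hd_error (map f l) = Some (f x).
Proof. destruct l; simpl; congruence. Qed.

Lemma hd_some {T} (l : list T) x : hd_error l = Some x -> exists l', l = x :: l'.
Proof. destruct l; simpl; intros H; inversion H; subst; eauto. Qed.

Lemma consec_tl {T} (R : rel T) a l : consec R (a :: l) -> consec R l.
Proof. destruct l; simpl; tauto. Qed.

Lemma consec_app {T} (R : rel T) l m d : consec R l -> consec R m ->
  (l <> [] -> m <> [] -> R (last l d) (hd d m)) -> consec R (l ++ m).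
Proof.
  revert d; induction l as [|a l IH]; intros d Hl Hm H. exact Hm.
  destruct l as [|b l].
  - destruct m as [|c m]. exact I. simpl. split; [|exact Hm].
    apply (H ltac:(discriminate) ltac:(discriminate)).
  - simpl in Hl |- *. destruct Hl as [Hab Hl]. split; [exact Hab|].
    apply (IH d Hl Hm). intros _ Hm'. apply (H ltac:(discriminate) Hm').
Qed.

Lemma consec_map {A B} (R : rel A) (S : rel B) (f : A -> B) l :
  (forall a b, R a b -> S (f a) (f b)) -> consec R l -> consec S (map f l).
Proof. intros H; induction l as [|a l IH]. exact (fun x => x).
  destruct l as [|b l]. simpl; auto. simpl. intros [h1 h2]. split; auto.
  apply IH. exact h2. Qed.

Lemma last_rev {T} (l : list T) d : last (rev l) d = hd d l.
Proof. destruct l as [|a l]. reflexivity. simpl. rewrite last_app. reflexivity. Qed.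

Lemma consec_rev {T} (R : rel T) l : (forall a b, R a b -> R b a) -> consec R l -> consec R (rev l).
Proof. intros Hs; induction l as [|a l IH]; intros H. exact I.
  simpl. apply consec_app with (d := a). apply IH. eapply consec_tl; eauto. exact I.
  intros Hn _. rewrite last_rev. destruct l as [|b l]. simpl in Hn. congruence.
  simpl. apply Hs. simpl in H. tauto. Qed.

Lemma hd_error_rev {T} (l : list T) x : hd_error (rev (x :: l)) = Some (last l x).
Proof. revert x; induction l as [|y l IH]; intros x. reflexivity.
  change (rev (x :: y :: l)) with (rev (y :: l) ++ [x]).
  rewrite last_cons. apply hd_error_app. apply IH. Qed.

Lemma ehtp_ctx {T} (E : rel T) l m p q : ehtp E l m -> ehtp E (p ++ l ++ q) (p ++ m ++ q).
Proof.
  induction 1.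
  - apply eh_refl.
  - now apply eh_sym.
  - eapply eh_trans; eauto.
  - replace (p ++ (u ++ a :: b :: c :: v) ++ q) with ((p ++ u) ++ a :: b :: c :: (v ++ q))
      by (repeat rewrite <- app_assoc; reflexivity).
    replace (p ++ (u ++ a :: c :: v) ++ q) with ((p ++ u) ++ a :: c :: (v ++ q))
      by (repeat rewrite <- app_assoc; reflexivity).
    now apply eh_tri.
  - replace (p ++ (u ++ a :: a :: v) ++ q) with ((p ++ u) ++ a :: a :: (v ++ q))
      by (repeat rewrite <- app_assoc; reflexivity).
    replace (p ++ (u ++ a :: v) ++ q) with ((p ++ u) ++ a :: (v ++ q))
      by (repeat rewrite <- app_assoc; reflexivity).
    now apply eh_deg.
Qed.

Lemma ehtp_l {T} (E : rel T) l m p : ehtp E l m -> ehtp E (p ++ l) (p ++ m).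
Proof. intros H. pose proof (ehtp_ctx E l m p [] H). rewrite !app_nil_r in H0. exact H0. Qed.
Lemma ehtp_r {T} (E : rel T) l m q : ehtp E l m -> ehtp E (l ++ q) (m ++ q).
Proof. intros H. exact (ehtp_ctx E l m [] q H). Qed.
Lemma ehtp_app {T} (E : rel T) l m l' m' : ehtp E l l' -> ehtp E m m' -> ehtp E (l ++ m) (l' ++ m').
Proof. intros H1 H2. eapply eh_trans. apply ehtp_r, H1. apply ehtp_l, H2. Qed.

Lemma eh_deg' {T} (E : rel T) L M u v a : E a a -> L = u ++ a :: a :: v -> M = u ++ a :: v -> ehtp E L M.
Proof. intros Ha -> ->. apply eh_deg. intros p q Hp Hq; simpl in *.
  destruct Hp as [<-|[]]; destruct Hq as [<-|[]]; exact Ha. Qed.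
Lemma eh_tri' {T} (E : rel T) L M u v a b c : rips_simplex E [a;b;c] ->
  L = u ++ a :: b :: c :: v -> M = u ++ a :: c :: v -> ehtp E L M.
Proof. intros Ha -> ->. now apply eh_tri. Qed.

Ltac solve_rips := let p := fresh "p" in let q := fresh "q" in
  let Hp := fresh "Hp" in let Hq := fresh "Hq" in
  intros p q Hp Hq; simpl in Hp, Hq;
  repeat match goal with H : _ \/ _ |- _ => destruct H | H : False |- _ => destruct H end;
  subst; eauto.

Lemma rips_incl {T} (E : rel T) s s' : (forall p, In p s -> In p s') -> rips_simplex E s' -> rips_simplex E s.
Proof. intros H R p q Hp Hq. apply R; auto. Qed.

Lemma rips_mono {T} (E E' : rel T) s : subrel E E' -> rips_simplex E s -> rips_simplex E' s.
Proof. intros H R p q Hp Hq. apply H, R; auto. Qed.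

Lemma ehtp_mono {T} (E E' : rel T) l m : subrel E E' -> ehtp E l m -> ehtp E' l m.
Proof. intros Hs; induction 1.
  - apply eh_refl. - now apply eh_sym. - eapply eh_trans; eauto.
  - apply eh_tri. eapply rips_mono; eauto.
  - apply eh_deg. eapply rips_mono; eauto. Qed.

Lemma rips_map {A B} (f : A -> B) (H : rel B) s :
  rips_simplex (preim f H) s -> rips_simplex H (map f s).
Proof. intros R p q Hp Hq. apply in_map_iff in Hp as [x [<- Hx]].
  apply in_map_iff in Hq as [y [<- Hy]]. apply (R x y Hx Hy). Qed.

Lemma ehtp_map {A B} (f : A -> B) (H : rel B) l m :
  ehtp (preim f H) l m -> ehtp H (map f l) (map f m).
Proof. induction 1.
  - apply eh_refl. - now apply eh_sym. - eapply eh_trans; eauto.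
  - rewrite !map_app. simpl. apply eh_tri. apply (rips_map f H [a;b;c]); auto.
  - rewrite !map_app. simpl. apply eh_deg. apply (rips_map f H [a]); auto. Qed.

Lemma ehtp_rev {T} (E : rel T) l m : ehtp E l m -> ehtp E (rev l) (rev m).
Proof. induction 1.
  - apply eh_refl. - now apply eh_sym. - eapply eh_trans; eauto.
  - apply (eh_tri' E _ _ (rev v) (rev u) c b a).
    + eapply rips_incl; [|exact H]. intros p Hp; simpl in *; tauto.
    + rewrite rev_app_distr. simpl. repeat rewrite <- app_assoc. reflexivity.
    + rewrite rev_app_distr. simpl. repeat rewrite <- app_assoc. reflexivity.
  - apply (eh_deg' E _ _ (rev v) (rev u) a).
    + apply H; simpl; auto.
    + rewrite rev_app_distr. simpl. repeat rewrite <- app_assoc. reflexivity.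
    + rewrite rev_app_distr. simpl. repeat rewrite <- app_assoc. reflexivity.
Qed.

Lemma ehtp_hd {T} (E: rel T) l m : ehtp E l m -> hd_error l = hd_error m.
Proof. induction 1; try congruence; destruct u; reflexivity. Qed.

Lemma ehtp_last {T} (E: rel T) l m : ehtp E l m -> forall d, last l d = last m d.
Proof. induction 1; intros d.
  - reflexivity. - rewrite IHehtp; reflexivity. - rewrite IHehtp1, IHehtp2; reflexivity.
  - rewrite !last_app, !last_cons. reflexivity.
  - rewrite !last_app, !last_cons. reflexivity. Qed.

Lemma rev_cancel {T} (E : rel T) (Er : forall z, E z z) : forall l x,
  consec (fun a b => rips_simplex E [a;b]) (x::l) ->
  ehtp E (rev l ++ x :: x :: l) [last l x].
Proof.
  induction l as [|y l IH]; intros x H.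
  - apply (eh_deg' E _ _ [] [] x); auto.
  - destruct H as [Hxy H]. rewrite last_cons.
    assert (E x y) by (apply Hxy; simpl; auto).
    assert (E y x) by (apply Hxy; simpl; auto).
    apply eh_trans with (m := rev l ++ y :: x :: y :: l).
    { apply (eh_deg' E _ _ (rev l ++ [y]) (y :: l) x); auto.
      all: simpl; repeat rewrite <- app_assoc; reflexivity. }
    apply eh_trans with (m := rev l ++ y :: y :: l).
    { apply (eh_tri' E _ _ (rev l) l y x y); [solve_rips|reflexivity|reflexivity]. }
    apply IH. exact H.
Qed.

Lemma pad {T} (E : rel T) (Er : forall z, E z z) m x :
  hd_error m = Some x -> ehtp E (x :: m ++ [last m x]) m.
Proof.
  intros Hm. destruct (hd_some m x Hm) as [m' ->].
  apply eh_trans with (m := x :: m' ++ [last (x :: m') x]).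
  { apply (eh_deg' E _ _ [] (m' ++ [last (x :: m') x]) x); auto. }
  assert (Hr : x :: m' = removelast (x :: m') ++ [last (x :: m') x])
    by (apply app_removelast_last; discriminate).
  apply (eh_deg' E _ _ (removelast (x :: m')) [] (last (x :: m') x)); auto.
  - transitivity ((removelast (x :: m') ++ [last (x :: m') x]) ++ [last (x :: m') x]).
    + rewrite <- Hr. reflexivity.
    + rewrite <- app_assoc; reflexivity.
Qed.

Lemma last_indep {T} (l : list T) z d d' : hd_error l = Some z -> last l d = last l d'.
Proof. intros H; destruct (hd_some l z H) as [l' ->]. rewrite !last_cons. reflexivity. Qed.

Lemma hd_of {T} (l : list T) z d : hd_error l = Some z -> hd d l = z.
Proof. destruct l; simpl; congruence. Qed.

Lemma lhomot_mono {T} (E E' : rel T) l m : subrel E E' -> lhomot E l m -> lhomot E' l m.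
Proof. intros Hs [xc [yc [xd [yd [h1 [h2 [h3 [h4 [h5 [h6 h7]]]]]]]]]].
  exists xc, yc, xd, yd. repeat split; auto. eapply ehtp_mono; eauto. Qed.

Lemma lhomot_transport {T} (E : rel T) l m l' m' :
  lhomot E l m -> ehtp E l l' -> ehtp E m m' -> lhomot E l' m'.
Proof. intros [xc [yc [xd [yd [h1 [h2 [h3 [h4 [h5 [h6 h7]]]]]]]]]] Hl Hm.
  exists xc, yc, xd, yd. repeat split; auto.
  - rewrite <- (ehtp_hd E _ _ Hl); auto.
  - rewrite <- (ehtp_last E _ _ Hl); auto.
  - rewrite <- (ehtp_hd E _ _ Hm); auto.
  - rewrite <- (ehtp_last E _ _ Hm); auto.
  - eapply eh_trans. apply eh_sym, Hl. eapply eh_trans. apply h7.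
    apply (ehtp_ctx E m m' [xc] [yc] Hm). Qed.

Lemma ehtp_lhomot {T} (E : rel T) (Er : forall z, E z z) l m x :
  hd_error l = Some x -> ehtp E l m -> lhomot E l m.
Proof. intros Hl H. pose proof (ehtp_hd E _ _ H) as Hh. pose proof (ehtp_last E _ _ H x) as Hla.
  exists x, (last l x), x, (last m x). repeat split; auto. congruence. rewrite Hla; auto.
  eapply eh_trans. exact H. apply eh_sym. rewrite Hla. apply pad; auto. congruence. Qed.

Lemma lhomot_ehtp {T} (E : rel T) (Er : forall z, E z z) l m x :
  lhomot E l m -> hd_error l = Some x -> hd_error m = Some x -> last l x = last m x -> ehtp E l m.
Proof. intros [xc [yc [xd [yd [h1 [h2 [h3 [h4 [h5 [h6 h7]]]]]]]]]] Hl Hm Hla.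
  assert (xc = x) by congruence. assert (xd = x) by congruence. subst xc xd.
  eapply eh_trans. exact h7. rewrite <- h2, Hla. apply pad; auto. Qed.

Lemma lhomot_prefix {T} (E : rel T) (Er : forall z, E z z) p h l m z :
  hd_error p = Some h -> hd_error l = Some z -> hd_error m = Some z ->
  lhomot E l m -> lhomot E (p ++ l) (p ++ m).
Proof. intros Hp Hl Hm [xc [yc [xd [yd [h1 [h2 [h3 [h4 [h5 [h6 h7]]]]]]]]]].
  assert (xc = z) by congruence. assert (xd = z) by congruence. subst xc xd.
  destruct (hd_some p h Hp) as [p' ->]. destruct (hd_some m z Hm) as [m' ->].
  exists h, yc, h, yd. repeat split; auto.
  - rewrite last_app. rewrite <- h2. apply (last_indep l z). auto.
  - rewrite last_app. rewrite <- h4. apply (last_indep _ z). auto.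
  - apply eh_trans with (m := (h :: p') ++ z :: (z :: m') ++ [yc]).
    { apply ehtp_l; auto. }
    apply eh_trans with (m := (h :: p') ++ (z :: m') ++ [yc]).
    { apply (eh_deg' E _ _ (h :: p') (m' ++ [yc]) z); auto. }
    apply eh_sym. apply (eh_deg' E _ _ [] (p' ++ (z :: m') ++ [yc]) h); auto.
    simpl. rewrite <- app_assoc. reflexivity. Qed.

Lemma lhomot_cancel {T} (E : rel T) (Er : forall z, E z z) p h l m z :
  consec (fun a b => rips_simplex E [a;b]) p ->
  hd_error p = Some h -> last p h = z -> hd_error l = Some z -> hd_error m = Some z ->
  lhomot E (p ++ l) (p ++ m) -> lhomot E l m.
Proof. intros Hc Hp Hz Hl Hm [xc [yc [xd [yd [h1 [h2 [h3 [h4 [h5 [h6 h7]]]]]]]]]].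
  destruct (hd_some p h Hp) as [p' ->].
  simpl in h1, h3. inversion h1; inversion h3; subst xc xd.
  exists z, yc, z, yd. repeat split; auto.
  - rewrite <- h2, last_app, Hz. reflexivity.
  - rewrite <- h4, last_app, Hz. reflexivity.
  - rewrite last_cons in Hz.
    pose proof (rev_cancel E Er p' h Hc) as K. rewrite Hz in K.
    destruct (hd_some l z Hl) as [l' ->].
    apply eh_trans with (m := [z] ++ z :: l').
    { apply eh_sym. apply (eh_deg' E _ _ [] l' z); auto. }
    apply eh_trans with (m := (rev p' ++ h :: h :: p') ++ z :: l').
    { apply ehtp_r. apply eh_sym. exact K. }
    apply eh_trans with (m := (rev p' ++ [h]) ++ (h :: (h :: p' ++ m) ++ [yc])).
    { replace ((rev p' ++ h :: h :: p') ++ z :: l') with ((rev p' ++ [h]) ++ ((h :: p') ++ z :: l'))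
        by (repeat rewrite <- app_assoc; reflexivity).
      apply ehtp_l. exact h7. }
    apply eh_trans with (m := (rev p' ++ h :: h :: p') ++ (m ++ [yc])).
    { apply (eh_deg' E _ _ (rev p' ++ [h]) ((p' ++ m) ++ [yc]) h); auto.
      all: repeat rewrite <- app_assoc; reflexivity. }
    apply (ehtp_r E _ [z] (m ++ [yc]) K).
Qed.

Lemma ent_refl {X : UniformSpace} (E : rel X) x : ent E -> E x x.
Proof. intros H; apply ent_diag; auto. Qed.
Lemma sent_refl {X : UniformSpace} (E : rel X) x : sent E -> E x x.
Proof. intros [H _]; apply ent_diag; auto. Qed.

Lemma sent_preim {X Y : UniformSpace} (f : X -> Y) H : generates f -> sent H -> sent (preim f H).
Proof. intros [_ [_ G]] [He Hs]. split.
  - destruct (G H He) as [E' [HE' Hsub]]. eapply ent_super; [exact HE'|].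
    intros x y Hxy. apply Hsub. exists x, y; auto.
  - intros x y; unfold preim; auto. Qed.

Lemma sent_img {X Y : UniformSpace} (f : X -> Y) F : generates f -> sent F -> sent (img f F).
Proof. intros [_ [G _]] [He Hs]. split; auto.
  intros u v [x [y [h1 [h2 h3]]]]. exists y, x; auto. Qed.

Lemma sent_sym {X : UniformSpace} (E : rel X) : ent E -> sent (fun x y => E x y /\ E y x).
Proof. intros H. split. apply ent_meet; auto. apply ent_inv; auto. intros x y []; auto. Qed.

Lemma sent_meet {X : UniformSpace} (E F : rel X) : sent E -> sent F -> sent (fun x y => E x y /\ F x y).
Proof. intros [h1 h2] [h3 h4]. split. apply ent_meet; auto. intros x y []; auto. Qed.

Lemma sent_full (X : UniformSpace) : sent (fun _ _ : X => True).
Proof. split. apply ent_full. auto. Qed.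

Lemma sub_preim_img {X Y : Type} (f : X -> Y) F : subrel F (preim f (img f F)).
Proof. intros x y H. exists x, y; auto. Qed.

Lemma img_mono {X Y : Type} (f : X -> Y) F F' : subrel F F' -> subrel (img f F) (img f F').
Proof. intros H u v [x [y [h1 h2]]]. exists x, y; auto. Qed.

Lemma preim_mono {X Y : Type} (f : X -> Y) F F' : subrel F F' -> subrel (preim f F) (preim f F').
Proof. intros H x y; unfold preim; auto. Qed.

Lemma gp_const {X : UniformSpace} (x : X) : gen_path x x (fun _ => [x]).
Proof. split. intros E _. repeat split. intros. apply eh_refl. Qed.

Lemma rips2 {T} (E : rel T) a : E a a -> rips_simplex E [a; a].
Proof. intros H. solve_rips. Qed.

Lemma gp_app {X : UniformSpace} (x y z : X) c d :
  gen_path x y c -> gen_path y z d -> gen_path x z (fun H => c H ++ d H).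
Proof. intros [c1 c2] [d1 d2]. split.
  - intros E HE. destruct (c1 E HE) as [a1 [a2 a3]]. destruct (d1 E HE) as [b1 [b2 b3]].
    split; [|split].
    + apply hd_error_app; auto.
    + rewrite last_app, a2. auto.
    + apply consec_app with (d := x); auto. intros _ _. rewrite a2, (hd_of _ y); auto.
      apply rips2. apply sent_refl; auto.
  - intros E F HE HF Hs. apply ehtp_app; auto. Qed.

Lemma gp_rev {X : UniformSpace} (x y : X) c : gen_path x y c -> gen_path y x (fun H => rev (c H)).
Proof. intros [c1 c2]. split.
  - intros E HE. destruct (c1 E HE) as [a1 [a2 a3]].
    destruct (hd_some _ _ a1) as [l' Hl]. rewrite Hl in *. split; [|split].
    + rewrite hd_error_rev. rewrite last_cons in a2. congruence.
    + rewrite last_rev. reflexivity.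
    + apply consec_rev; auto. intros a b R. eapply rips_incl; [|exact R]. simpl; tauto.
  - intros E F HE HF Hs. apply ehtp_rev; auto. Qed.

Lemma gp_tilde {X Y : UniformSpace} (f : X -> Y) (x y : X) c :
  generates f -> gen_path x y c -> gen_path (f x) (f y) (tilde f c).
Proof. intros G [c1 c2]. split.
  - intros E HE. destruct (c1 _ (sent_preim f E G HE)) as [a1 [a2 a3]]. unfold tilde.
    split; [|split].
    + apply hd_error_map; auto.
    + rewrite last_map, a2. auto.
    + apply consec_map with (R := fun a b => rips_simplex (preim f E) [a;b]); auto.
      intros a b R. apply (rips_map f E [a;b] R).
  - intros E F HE HF Hs. unfold tilde. apply ehtp_map. apply c2.
    apply sent_preim; auto. apply sent_preim; auto. apply preim_mono; auto. Qed.

Lemma gp_epath {X : UniformSpace} (x y : X) c E : gen_path x y c -> sent E ->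
  hd_error (c E) = Some x /\ last (c E) x = y /\ consec (fun a b => rips_simplex E [a;b]) (c E).
Proof. intros [c1 _] HE. apply c1; auto. Qed.

Lemma chain_gp {X : UniformSpace} (G F0 : rel X) :
  sent G -> sent F0 ->
  (forall x y, F0 x y -> exists c, gen_path x y c /\ short G x y c) ->
  forall l x, chain F0 x l -> exists A, gen_path x (last l x) A /\
    forall H, sent H -> subrel G H -> ehtp H (A H) l.
Proof.
  intros HG HF J l. induction l as [|x0 t IH]; intros x [Hh Hc]. discriminate.
  simpl in Hh. inversion Hh; subst x0. clear Hh.
  destruct t as [|y t'].
  - exists (fun _ => [x]). split. apply gp_const. intros. apply eh_refl.
  - destruct Hc as [Fxy Hc]. destruct (J x y Fxy) as [c [Hc1 [Gxy Hc2]]].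
    destruct (IH y (conj eq_refl Hc)) as [A' [HA1 HA2]].
    exists (fun H => c H ++ A' H). split.
    + replace (last (x :: y :: t') x) with (last (y :: t') y) by (rewrite !last_cons; reflexivity).
      apply (gp_app x y); auto.
    + intros H HH Hsub. apply eh_trans with (m := [x; y] ++ y :: t').
      * apply ehtp_app; auto. apply eh_trans with (m := c G).
        apply eh_sym. apply (proj2 Hc1); auto.
        eapply ehtp_mono; eauto.
      * apply (eh_deg' H _ _ [x] t' y); auto. apply sent_refl; auto.
Qed.

Lemma consec_mono {T} (R S : rel T) l : subrel R S -> consec R l -> consec S l.
Proof. intros Hs; induction l as [|a l IH]. auto. destruct l as [|b l]. auto.
  simpl. intros [h1 h2]. split. apply Hs; auto. apply IH; auto. Qed.

Lemma in_GP_of {X : UniformSpace} (x y : X) c : gen_path x y c -> in_GP x c.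
Proof. intros H; exists y; exact H. Qed.

Lemma lhomot_map {A B} (f : A -> B) (F : rel B) l m :
  lhomot (preim f F) l m -> lhomot F (map f l) (map f m).
Proof. intros [xc [yc [xd [yd [h1 [h2 [h3 [h4 [h5 [h6 h7]]]]]]]]]].
  exists (f xc), (f yc), (f xd), (f yd). repeat split; auto.
  - apply hd_error_map; auto.
  - rewrite last_map, h2; auto.
  - apply hd_error_map; auto.
  - rewrite last_map, h4; auto.
  - apply ehtp_map in h7. rewrite map_cons, map_app in h7. exact h7. Qed.

Lemma C1_of {X Y : UniformSpace} (f : X -> Y) :
  generates f -> uniformly_joinable X -> GP1 f -> GP2 f -> C1 f.
Proof.
  intros Gf J P1 P2 E HE.
  destruct (P2 E HE) as [F1 [HF1 P2E]].
  destruct (J F1 HF1) as [F0 [HF0 JF]].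
  exists F0. split; auto.
  intros x0 l. revert x0. induction l as [|y t IH]; intros x0 [Hh Hc]. discriminate.
  simpl in Hh; inversion Hh; subst y; clear Hh.
  destruct t as [|y' t'].
  - exists [x0]. split; [split; [reflexivity|exact I]|reflexivity].
  - destruct Hc as [[x [w [Fxw [fx fw]]]] Hc].
    destruct (JF x w Fxw) as [c [Hcp [F1xw Hcs]]].
    pose proof (gp_tilde f x w c Gf Hcp) as Htc. rewrite fx in Htc.
    destruct (P1 x0 (tilde f c) (in_GP_of _ _ _ Htc)) as [d [[z Hd] Hdc]].
    pose proof (gp_tilde f x0 z d Gf Hd) as Htd.
    assert (Hfz : f z = y').
    { destruct (gp_epath _ _ _ _ Htd (sent_full Y)) as [_ [L1 _]].
      destruct (gp_epath _ _ _ _ Htc (sent_full Y)) as [_ [L2 _]].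
      rewrite <- fw, <- L1, <- L2. apply (ehtp_last _ _ _ (Hdc _ (sent_full Y))). }
    assert (Ez : E z x0).
    { set (K := img f F1). assert (HK : sent K) by (apply sent_img; auto).
      assert (HP : sent (preim f K)) by (apply sent_preim; auto).
      assert (Q' : gp_homot E d (fun _ => [x0])).
      { apply (P2E x0 d (fun _ => [x0]) (in_GP_of _ _ _ Hd) (in_GP_of _ _ _ (gp_const x0))).
        unfold gp_homot. change (tilde f (fun _ => [x0]) K) with [f x0].
        assert (Hdm : ehtp K (tilde f d K) [f x0; y']).
        { eapply eh_trans. apply (Hdc K HK). unfold tilde.
          rewrite <- fx, <- fw. apply (ehtp_map f K (c (preim f K)) [x; w]).
          apply eh_trans with (m := c F1).
          - apply eh_sym. apply (proj2 Hcp); auto. apply sub_preim_img.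
          - eapply ehtp_mono; [|exact Hcs]. apply sub_preim_img. }
        destruct (gp_epath _ _ _ _ Htd HK) as [e1 [e2 _]].
        exists (f x0), y', (f x0), (f x0). repeat split; auto.
        - rewrite (ehtp_last _ _ _ Hdm). reflexivity.
        - apply sent_refl; auto.
        - exists w, x. repeat split; auto. apply (proj2 HF1); auto.
        - eapply eh_trans. exact Hdm. apply eh_sym.
          apply (eh_deg' K _ _ [] [y'] (f x0)); auto. apply sent_refl; auto. }
      destruct Q' as [xc [yc [xd [yd [h1 [h2 [h3 [h4 [h5 [h6 h7]]]]]]]]]].
      simpl in h3, h4. inversion h3; subst xd. subst yd.
      destruct (gp_epath _ _ _ _ Hd HE) as [e1 [e2 _]].
      rewrite e1 in h1; inversion h1; subst xc. rewrite e2 in h2. subst yc. exact h6. }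
    destruct (IH z) as [l'' [[Hl1 Hl2] Hl3]].
    { split. simpl. congruence. exact Hc. }
    exists (x0 :: l''). split; [split|].
    + reflexivity.
    + destruct (hd_some _ _ Hl1) as [l3 ->]. split; auto. apply (proj2 HE); auto.
    + simpl. rewrite Hl3. reflexivity.
Qed.

Lemma C2_of {X Y : UniformSpace} (f : X -> Y) :
  generates f -> uniformly_joinable X -> GP2 f -> C2 f.
Proof.
  intros Gf J P2 E HE. destruct (P2 E HE) as [F1 [HF1 P2E]].
  set (G := fun x y => E x y /\ F1 x y). assert (HG : sent G) by (apply sent_meet; auto).
  destruct (J G HG) as [F0 [HF0 JF]].
  exists (fun x y => F0 x y /\ G x y). split. apply sent_meet; auto.
  intros x0 a b [Ha1 Ha2] [Hb1 Hb2] Hab.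
  assert (S0 : subrel (fun x y => F0 x y /\ G x y) F0) by (intros ? ? []; auto).
  destruct (chain_gp G F0 HG HF0 JF a x0 (conj Ha1 (consec_mono _ _ _ S0 Ha2))) as [A [HA1 HA2]].
  destruct (chain_gp G F0 HG HF0 JF b x0 (conj Hb1 (consec_mono _ _ _ S0 Hb2))) as [B' [HB1 HB2]].
  set (K := img f F1). assert (HK : sent K) by (apply sent_img; auto).
  assert (HP : sent (preim f K)) by (apply sent_preim; auto).
  assert (GP : subrel G (preim f K)).
  { intros x y [_ h]. apply sub_preim_img; auto. }
  assert (L : lhomot K (tilde f A K) (tilde f B' K)).
  { apply lhomot_transport with (map f a) (map f b).
    - eapply lhomot_mono; [|exact Hab]. apply img_mono. intros x y [_ [_ h]]; auto.
    - apply eh_sym. apply ehtp_map. apply HA2; auto.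
    - apply eh_sym. apply ehtp_map. apply HB2; auto. }
  pose proof (P2E x0 A B' (in_GP_of _ _ _ HA1) (in_GP_of _ _ _ HB1) L) as M.
  unfold gp_homot in M.
  apply lhomot_transport with (A E) (B' E); auto.
  - apply HA2; auto. intros x y []; auto.
  - apply HB2; auto. intros x y []; auto.
Qed.

Lemma tue_of {X Y : UniformSpace} (f : X -> Y) (x0 : X) :
  Hausdorff X -> generates f -> GP1 f -> GP2 f -> tilde_unif_equiv f x0.
Proof.
  intros HX Gf P1 P2. split; [|split; [|split]].
  - intros c d [yc Hc] [yd Hd] Heq.
    assert (Key : forall S, sent S -> lhomot S (c S) (d S)).
    { intros S HS. destruct (P2 S HS) as [F1 [HF1 P]].
      apply (P x0); [exact (in_GP_of _ _ _ Hc) | exact (in_GP_of _ _ _ Hd) |]. unfold gp_homot.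
      assert (HK : sent (img f F1)) by (apply sent_img; auto).
      apply ehtp_lhomot with (x := f x0).
      - intros; apply sent_refl; auto.
      - exact (proj1 (gp_epath _ _ _ _ (gp_tilde f _ _ _ Gf Hc) HK)).
      - apply Heq; auto. }
    assert (Hy : yc = yd).
    { apply HX. intros E0 HE0. pose proof (sent_sym E0 HE0) as HS.
      destruct (Key _ HS) as [xc [yc' [xd [yd' [h1 [h2 [h3 [h4 [h5 [h6 h7]]]]]]]]]].
      destruct (gp_epath _ _ _ _ Hc HS) as [e1 [e2 _]].
      destruct (gp_epath _ _ _ _ Hd HS) as [e3 [e4 _]].
      rewrite e1 in h1; inversion h1; subst xc. rewrite e3 in h3; inversion h3; subst xd.
      rewrite e2 in h2. rewrite e4 in h4. subst. apply h6. }
    subst yd. intros E HE.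
    destruct (gp_epath _ _ _ _ Hc HE) as [e1 [e2 _]].
    destruct (gp_epath _ _ _ _ Hd HE) as [e3 [e4 _]].
    apply lhomot_ehtp with (x := x0); auto.
    + intros; apply sent_refl; auto.
    + congruence.
  - intros e He. apply P1; auto.
  - intros F HF. exists (preim f F). split. apply sent_preim; auto.
    intros c d _ _ H. apply lhomot_map. exact H.
  - intros E HE. destruct (P2 E HE) as [F1 [HF1 P]]. exists (img f F1). split.
    apply sent_img; auto. intros c d Hc Hd H. apply (P x0); auto.
Qed.

Lemma gp_connect {X : UniformSpace} (x0 x1 : X) :
  uniformly_joinable X -> chain_connected X -> exists g, gen_path x0 x1 g.
Proof.
  intros J CC. destruct (J _ (sent_full X)) as [F0 [HF0 JF]].
  destruct (CC F0 HF0 x0 x1) as [l [Hl Hlast]].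
  destruct (chain_gp _ F0 (sent_full X) HF0 JF l x0 Hl) as [A [HA _]].
  rewrite Hlast in HA. eauto.
Qed.

Lemma GP1_of_tue {X Y : UniformSpace} (f : X -> Y) (x0 : X) :
  generates f -> uniformly_joinable X -> chain_connected X -> tilde_unif_equiv f x0 -> GP1 f.
Proof.
  intros Gf J CC [_ [Hsurj _]] x1 e [ye He].
  destruct (gp_connect x0 x1 J CC) as [g Hg].
  pose proof (gp_tilde f _ _ _ Gf Hg) as Htg.
  pose proof (gp_app _ _ _ _ _ Htg He) as He'.
  destruct (Hsurj _ (in_GP_of _ _ _ He')) as [c [[w Hc] Hce]].
  exists (fun H => rev (g H) ++ c H). split.
  - exists w. apply (gp_app x1 x0 w); auto. apply gp_rev; auto.
  - intros H HH. unfold tilde. rewrite map_app, map_rev.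
    assert (HP : sent (preim f H)) by (apply sent_preim; auto).
    apply eh_trans with (m := rev (map f (g (preim f H))) ++ (map f (g (preim f H)) ++ e H)).
    { apply ehtp_l. apply (Hce H HH). }
    destruct (gp_epath _ _ _ _ Htg HH) as [e1 [e2 e3]]. unfold tilde in e1, e2, e3.
    destruct (hd_some _ _ e1) as [L' HL]. rewrite HL in *.
    destruct (gp_epath _ _ _ _ He HH) as [e4 _]. destruct (hd_some _ _ e4) as [e' Hee].
    rewrite Hee.
    pose proof (rev_cancel H (fun z => sent_refl H z HH) L' (f x0) e3) as K.
    rewrite last_cons in e2. rewrite e2 in K.
    apply eh_trans with (m := [f x1] ++ f x1 :: e').
    { replace (rev (f x0 :: L') ++ (f x0 :: L') ++ f x1 :: e')
        with ((rev L' ++ f x0 :: f x0 :: L') ++ f x1 :: e')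
        by (simpl; repeat rewrite <- app_assoc; reflexivity).
      apply ehtp_r. exact K. }
    apply (eh_deg' H _ _ [] e' (f x1)); auto. apply sent_refl; auto.
Qed.

Lemma GP2_of_tue {X Y : UniformSpace} (f : X -> Y) (x0 : X) :
  generates f -> uniformly_joinable X -> chain_connected X -> tilde_unif_equiv f x0 -> GP2 f.
Proof.
  intros Gf J CC [_ [_ [_ Hinv]]] E HE.
  destruct (Hinv E HE) as [F [HF PF]].
  destruct (proj2 (proj2 Gf) F (proj1 HF)) as [E' [HE' Hsub]].
  exists (fun x y => E' x y /\ E' y x). split. apply sent_sym; auto.
  intros x1 a b [ya Ha] [yb Hb] Hab.
  destruct (gp_connect x0 x1 J CC) as [g Hg].
  pose proof (gp_app _ _ _ _ _ Hg Ha) as Hga.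
  pose proof (gp_app _ _ _ _ _ Hg Hb) as Hgb.
  set (K := img f (fun x y => E' x y /\ E' y x)).
  assert (HK : sent K) by (apply sent_img; auto; apply sent_sym; auto).
  assert (KF : subrel K F).
  { intros u v Huv. apply Hsub. revert Huv. apply img_mono. intros ? ? []; auto. }
  assert (HPK : sent (preim f K)) by (apply sent_preim; auto).
  assert (HQ : sent (preim f F)) by (apply sent_preim; auto).
  assert (L1 : lhomot F (tilde f a F) (tilde f b F)).
  { apply lhomot_transport with (tilde f a K) (tilde f b K).
    - eapply lhomot_mono; [exact KF|exact Hab].
    - unfold tilde. apply ehtp_map. apply (proj2 Ha); auto. apply preim_mono; auto.
    - unfold tilde. apply ehtp_map. apply (proj2 Hb); auto. apply preim_mono; auto. }
  assert (L2 : gp_homot F (tilde f (fun H => g H ++ a H)) (tilde f (fun H => g H ++ b H))).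
  { unfold gp_homot, tilde. rewrite !map_app.
    destruct (gp_epath _ _ _ _ (gp_tilde f _ _ _ Gf Hg) HF) as [e1 _].
    destruct (gp_epath _ _ _ _ (gp_tilde f _ _ _ Gf Ha) HF) as [e2 _].
    destruct (gp_epath _ _ _ _ (gp_tilde f _ _ _ Gf Hb) HF) as [e3 _].
    apply lhomot_prefix with (h := f x0) (z := f x1); auto.
    intros; apply sent_refl; auto. }
  pose proof (PF _ _ (in_GP_of _ _ _ Hga) (in_GP_of _ _ _ Hgb) L2) as M.
  unfold gp_homot in M.
  destruct (gp_epath _ _ _ _ Hg HE) as [e1 [e2 e3]].
  destruct (gp_epath _ _ _ _ Ha HE) as [e4 _].
  destruct (gp_epath _ _ _ _ Hb HE) as [e5 _].
  unfold gp_homot.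
  apply lhomot_cancel with (p := g E) (h := x0) (z := x1); auto.
  intros; apply sent_refl; auto.
Qed.

Theorem mainTheorem14 (X Y : UniformSpace) (f : X -> Y) :
  inhabited X ->
  Hausdorff X -> Hausdorff Y ->
  uniformly_joinable X -> chain_connected X ->
  generates f ->
  (gen_uniform_covering f <-> GP1 f /\ GP2 f) /\
  (GP1 f /\ GP2 f <-> exists x0 : X, tilde_unif_equiv f x0).
Proof.
  intros [x0] HX HY J CC Gf. split; split.
  - intros [_ [p1 [p2 _]]]; auto.
  - intros [p1 p2]. refine (conj Gf (conj p1 (conj p2 (conj _ _)))). apply C1_of; auto. apply C2_of; auto.
  - intros [p1 p2]. exists x0. apply tue_of; auto.
  - intros [x1 T]. split. apply (GP1_of_tue f x1); auto. apply (GP2_of_tue f x1); auto.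
Qed.
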